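(* Assume the standing hypotheses described in the context. For any $y\in B(x_0,R)$, \[-f(\|y-x_0\|)\le\|F'(x_0)^{-1}F(y)\|\le f(\|y-x_0\|)+2\|y-x_0\|.\]
   Context: Standing hypotheses: $\mathbb X,\mathbb Y$ are Banach spaces; $B(x,r)$ is the open ball. $R\in\mathbb R$, $C\subseteq\mathbb X$, $F:C\to\mathbb Y$ is continuous and continuously differentiable on $\mathrm{int}(C)$, $x_0\in\mathrm{int}(C)$ with $F'(x_0)$ non-singular, $f:[0,R)\to\mathbb R$ is continuously differentiable, $B(x_0,R)\subseteq C$, $\|F'(x_0)^{-1}[F'(y)-F'(x)]\|\le f'(\|y-x\|+\|x-x_0\|)-f'(\|x-x_0\|)$ for all $x,y\in B(x_0,R)$ with $\|x-x_0\|+\|y-x\|<R$, $\|F'(x_0)^{-1}F(x_0)\|\le f(0)$, and (h1) $f(0)>0$, $f'(0)=-1$; (h2) $f'$ is strictly increasing and convex; (h3) $f(t)<0$ for some $t\in(0,R)$. *)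

(* Defs.v *)
From HB Require Import structures.
From mathcomp Require Import all_boot all_order all_algebra.
From mathcomp Require Import all_classical all_reals all_analysis.
Set Implicit Arguments. Unset Strict Implicit. Unset Printing Implicit Defensive.
Import Order.TTheory GRing.Theory Num.Theory.
Import numFieldNormedType.Exports.
Local Open Scope classical_set_scope.
Local Open Scope ring_scope.

Definition opnorm {R : realType} {X Y : normedModType R} (L : X -> Y) : R :=
  sup [set `|L x| | x in [set x : X | `|x| <= 1]].

Definition cont_diff_on {R : realType} {X Y : normedModType R}
  (F : X -> Y) (A : set X) : Prop :=
  forall x, A x -> differentiable F x /\
    (fun y => opnorm (fun v => 'd F y v - 'd F x v)) @ x --> (0 : R).

(* Main.v *)
Require Import Defs.
From HB Require Import structures.
From mathcomp Require Import all_boot all_order all_algebra.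
From mathcomp Require Import all_classical all_reals all_analysis.
From mathcomp Require Import ring lra.
Import Order.TTheory GRing.Theory Num.Theory.
Import numFieldNormedType.Exports.
Local Open Scope classical_set_scope.
Local Open Scope ring_scope.
Set Implicit Arguments. Unset Strict Implicit.

Lemma andI2 {a b : bool} : a -> b -> a && b.
Proof. by move=> -> ->. Qed.

Lemma mvi (R : realType) (X : normedModType R) (phi : R -> X) (psi : R -> R) :
  (forall a b, 0 <= a -> a <= b -> b <= 1 -> psi a <= psi b) ->
  (forall s, 0 < s <= 1 -> forall e, 0 < e -> exists2 d, 0 < d &
     forall u, s - d < u < s -> `|phi s - phi u| <= e) ->
  (forall s, 0 <= s < 1 -> forall e, 0 < e -> exists2 d, 0 < d &
     forall u, s < u < s + d -> `|phi u - phi s| <= psi u - psi s + e * (u - s)) ->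
  `|phi 1 - phi 0| <= psi 1 - psi 0.
Proof.
move=> mono lc rd.
apply/ler_addgt0Pr => e e0.
pose P u := `|phi u - phi 0| <= psi u - psi 0 + e * u.
pose A := [set s : R | 0 <= s <= 1 /\ forall u, 0 <= u <= s -> P u].
have P0 : P 0 by rewrite /P !subrr normr0 mulr0 addr0.
have A0 : A 0.
  rewrite /A /=; split; first by rewrite lexx ler01.
  move=> u /andP[u0 u0']; have -> : u = 0 by apply/eqP; rewrite eq_le u0 u0'.
  exact: P0.
have hsA : has_sup A by split; [exists 0 | exists 1 => s [/andP[_ ]]].
set c := sup A.
have c0 : 0 <= c by exact: sup_upper_bound.
have c1 : c <= 1 by apply: ge_sup; [exists 0 | move=> s [/andP[_ ]]].
have Plt : forall u, 0 <= u < c -> P u.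
  move=> u /andP[u0 uc].
  have cu0 : 0 < c - u by rewrite subr_gt0.
  have [s [_ Hs] us] := sup_adherent cu0 hsA.
  by apply: Hs; rewrite u0 /=; move: us; rewrite opprB addrC subrK => /ltW.
have Pc : P c.
  have [->|cpos] := eqVneq c 0; first exact: P0.
  have cp : 0 < c by rewrite lt_def cpos c0.
  rewrite /P; apply/ler_addgt0Pr => eta eta0.
  have [d d0 Hd] := lc c (andI2 cp c1) eta eta0.
  pose u := Num.max (c - d / 2) (c / 2).
  have uc : u < c by rewrite /u gt_max; apply/andP; split; lra.
  have u0 : 0 <= u by rewrite /u le_max; apply/orP; right; lra.
  have cdu : c - d < u by rewrite /u lt_max; apply/orP; left; lra.
  have := Plt u (andI2 u0 uc); rewrite /P => Pu.
  have := Hd u (andI2 cdu uc) => Hu.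
  have := mono u c u0 (ltW uc) c1 => m.
  have := ler_normD (phi c - phi u) (phi u - phi 0).
  rewrite addrA subrK => t.
  have : e * u <= e * c by rewrite ler_pM2l // ltW.
  lra.
suff c1' : c = 1 by move: Pc; rewrite /P c1' mulr1.
apply/eqP; rewrite eq_le c1 /=; apply/negP => /negP; rewrite -ltNge => c1s.
have [d d0 Hd] := rd c (andI2 c0 c1s) e e0.
pose s' := Num.min (c + d / 2) 1.
have cs' : c < s' by rewrite /s' lt_min; apply/andP; split; lra.
have As' : A s'.
  split; first by rewrite /s' ge_min lexx orbT andbT le_min; apply/andP; split; lra.
  move=> u /andP[u0 us].
  have [uc|cu] := leP u c.
    have [uc'|] := ltP u c; first by apply: Plt; rewrite u0.
    move=> cu; have -> : u = c by apply/eqP; rewrite eq_le uc cu.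
    exact: Pc.
  have ud : u < c + d.
    apply: (le_lt_trans us); rewrite /s' gt_min; apply/orP; left; lra.
  have := Hd u (andI2 cu ud) => Hu.
  move: Pc; rewrite /P => Pc.
  have := ler_normD (phi u - phi c) (phi c - phi 0).
  rewrite addrA subrK => t.
  have : e * (u - c) = e * u - e * c by rewrite mulrBr.
  lra.
have := sup_upper_bound hsA As'; rewrite -/c; lra.
Qed.

Lemma near_pt (R : realType) (V : normedModType R) (a : V) (P : V -> Prop) :
  (\forall x \near a, P x) -> exists2 d : R, 0 < d & forall x, `|x - a| < d -> P x.
Proof.
move=> /nbhs_normP [d d0 Hd]; exists d => // x xa; apply: Hd.
by rewrite /ball_ /= distrC.
Qed.

Lemma near_dpt (R : realType) (a : R) (P : R -> Prop) :
  (\forall x \near a^', P x) -> exists2 d : R, 0 < d & forall x, `|x - a| < d -> x != a -> P x.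
Proof.
rewrite near_withinE => /near_pt [d d0 Hd]; exists d => // x xa xna.
Qed.

Lemma hom_bounded (R : realType) (V W : normedModType R) (g : V -> W) :
  (forall (k : R) w, g (k *: w) = k *: g w) -> {for 0, continuous g} ->
  exists2 M : R, 0 < M & forall w, `|g w| <= M * `|w|.
Proof.
move=> gZ gc.
have g0 : g 0 = 0 by rewrite -(scale0r (0 : V)) gZ scale0r.
move/cvgrPdist_lt : gc => /(_ 1 ltr01) /near_pt [d d0 Hd].
exists (2 / d); first by rewrite divr_gt0.
move=> w; have [->|wn0] := eqVneq w 0; first by rewrite g0 !normr0 mulr0.
have wp : 0 < `|w| by rewrite normr_gt0.
pose k := d / (2 * `|w|).
have kp : 0 < k by rewrite /k divr_gt0 // mulr_gt0.
have := Hd (k *: w); rewrite subr0 normrZ (gtr0_norm kp) g0 sub0r normrN gZ normrZ (gtr0_norm kp).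
have -> : k * `|w| = d / 2 by rewrite /k; field; rewrite gt_eqF.
move=> /(_ ltac:(lra)) /ltW; rewrite /k => H.
rewrite -(@ler_pM2l _ k) // mulrA /k.
have -> : d / (2 * `|w|) * (2 / d) * `|w| = 1.
  field; apply/andP; split; rewrite gt_eqF //.
exact: H.
Qed.

Lemma opnorm_le (R : realType) (V W : normedModType R) (g : V -> W) :
  (forall (k : R) w, g (k *: w) = k *: g w) ->
  (exists2 M : R, 0 < M & forall w, `|g w| <= M * `|w|) ->
  forall w, `|g w| <= opnorm g * `|w|.
Proof.
move=> gZ [M M0 HM] w.
have g0 : g 0 = 0 by rewrite -(scale0r (0 : V)) gZ scale0r.
have [->|wn0] := eqVneq w 0; first by rewrite g0 !normr0 mulr0.
have wp : 0 < `|w| by rewrite normr_gt0.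
have hs : has_sup [set `|g x| | x in [set x : V | `|x| <= 1]].
  split; first by exists `|g 0|, 0 => //=; rewrite normr0 ler01.
  exists M => _ [x /= x1 <-]; apply: (le_trans (HM x)).
  by rewrite -[leRHS]mulr1 ler_pM2l.
have mem : [set `|g x| | x in [set x : V | `|x| <= 1]] `|g (`|w|^-1 *: w)|.
  exists (`|w|^-1 *: w) => //=.
  by rewrite normrZ ger0_norm ?invr_ge0 ?normr_ge0 // mulVf ?gt_eqF.
have := sup_upper_bound hs mem.
rewrite gZ normrZ ger0_norm ?invr_ge0 ?normr_ge0 //.
rewrite -/(opnorm g) => H.
by rewrite -ler_pdivrMr // mulrC.
Qed.

Lemma f_rcont (R : realType) (f df : R -> R) :
  (fun h => h^-1 * (f h - f 0)) @ 0^'+ --> df 0 -> f @ 0^'+ --> f 0.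
Proof.
move=> hlim; apply/cvgrPdist_le => eps eps0.
move/cvgrPdist_le: hlim => /(_ 1 ltr01) H.
have K0 : 0 < `|df 0| + 1 by rewrite ltr_pwDr.
near=> h.
have hp : 0 < h by near: h; exact: nbhs_right_gt.
have Hq : `|df 0 - h^-1 * (f h - f 0)| <= 1 by near: h; exact: H.
have hs : h < eps / (`|df 0| + 1) by near: h; apply: nbhs_right_lt; rewrite divr_gt0.
have q1 : `|h^-1 * (f h - f 0)| <= `|df 0| + 1.
  have := ler_normD (df 0) (- (df 0 - h^-1 * (f h - f 0))).
  rewrite opprB addrC subrK distrC; lra.
have E : f 0 - f h = - (h * (h^-1 * (f h - f 0))).
  by rewrite mulrA mulfV ?gt_eqF // mul1r opprB.
rewrite E normrN normrM (gtr0_norm hp).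
apply: (le_trans (_ : _ <= h * (`|df 0| + 1))); first by rewrite ler_pM2l.
rewrite -ler_pdivlMr //; exact: ltW.
Unshelve. all: by end_near.
Qed.

Lemma f_cont (R : realType) (f df : R -> R) (Rad : R) :
  (forall t, 0 < t < Rad -> is_derive t 1 f (df t)) ->
  forall x, 0 < x < Rad -> {for x, continuous f}.
Proof.
move=> hder x xr; apply: differentiable_continuous; apply/derivable1_diffP.
by have [] := hder x xr.
Qed.

Lemma f_within (R : realType) (f df : R -> R) (Rad : R) :
  (forall t, 0 < t < Rad -> is_derive t 1 f (df t)) ->
  (fun h => h^-1 * (f h - f 0)) @ 0^'+ --> df 0 ->
  forall p q, 0 <= p < q -> q < Rad -> {within `[p, q], continuous f}.
Proof.
move=> hder hlim p q /andP[p0 pq] qR.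
apply/continuous_within_itvP => //; split.
- move=> x; rewrite in_itv /= => /andP[px xq]; have xr : 0 < x < Rad by apply/andP; split; lra.
  by have := f_cont hder xr.
- have [->|pn0] := eqVneq p 0; first exact: f_rcont hlim.
  have pp : 0 < p by rewrite lt_def pn0 p0.
  have pr : 0 < p < Rad by apply/andP; split; lra.
  exact: (cvg_at_right_filter (f_cont hder pr)).
- have qr : 0 < q < Rad by apply/andP; split; lra.
  exact: (cvg_at_left_filter (f_cont hder qr)).
Qed.

Lemma finc (R : realType) (f df : R -> R) (Rad : R) :
  (forall t, 0 < t < Rad -> is_derive t 1 f (df t)) ->
  (fun h => h^-1 * (f h - f 0)) @ 0^'+ --> df 0 ->
  (forall s t, 0 <= s -> s < t -> t < Rad -> df s < df t) ->
  forall p q, 0 <= p < q -> q < Rad -> (q - p) * df p <= f q - f p.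
Proof.
move=> hder hlim hmono p q /andP[p0 pq] qR.
have hd : forall x, x \in `]p, q[ -> is_derive x 1 f (df x).
  move=> x; rewrite in_itv /= => /andP[px xq]; apply: hder; apply/andP; split; lra.
have [c cpq ->] := MVT pq hd (f_within hder hlim (andI2 p0 pq) qR).
move: cpq; rewrite in_itv /= => /andP[pc cq].
rewrite mulrC ler_pM2r ?subr_gt0 //; apply/ltW/hmono => //; lra.
Qed.

Lemma dcvg (R : realType) (X Y : normedModType R) (F : X -> Y) (a v : X) :
  differentiable F a ->
  (fun h : R => h^-1 *: (F (h *: v + a) - F a)) @ 0^' --> 'd F a v.
Proof.
move=> dF; have := @diff_derivable _ _ _ F a v dF; rewrite /derivable => H.
have := @deriveE _ _ _ F a v dF; rewrite /derive => <-.
exact: H.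
Qed.

Lemma id1 (V : zmodType) (A B E P Q : V) : (A - P) - (B - Q) = (A - B - E) + (E - (P - Q)).
Proof.
rewrite addrA subrK !opprB !addrA.
by rewrite [LHS]addrAC [A - P - B]addrAC [RHS]addrAC.
Qed.

Lemma fin_ineq (R : realType) (V : normedModType R) (a b v : V) :
  `|a| <= `|a - b - v| + `|b| + `|v| /\ `|v| <= `|a - b - v| + `|a| + `|b|.
Proof.
split.
  have E : a = (a - b - v) + (b + v) by rewrite addrA [a - b - v + b]addrAC !subrK.
  rewrite {1}E; apply: (le_trans (ler_normD _ _)).
  rewrite -[leRHS]addrA lerD2l; exact: ler_normD.
have E : v = - (a - b - v) + (a - b) by rewrite opprB subrK.
rewrite {1}E; apply: (le_trans (ler_normD _ _)).
rewrite normrN -[leRHS]addrA lerD2l; apply: (le_trans (ler_normD _ _)).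
by rewrite normrN.
Qed.

Lemma int_ball (R : realType) (X : normedModType R) (C : set X) (x0 z : X) (Rad : R) :
  ball x0 Rad `<=` C -> `|z - x0| < Rad -> interior C z.
Proof.
move=> bC zr; rewrite /interior /=; apply/nbhs_ballP.
exists (Rad - `|z - x0|); first by rewrite /= subr_gt0.
move=> w; rewrite -ball_normE /= => zw; apply: bC; rewrite -ball_normE /=.
have := ler_normD (x0 - z) (z - w); rewrite addrA subrK distrC => H.
rewrite [`|x0 - z|]distrC in H; lra.
Qed.

Lemma phi_cont (R : realType) (X Y : normedModType R) (F : X -> Y) (Finv : Y -> X) (x0 v : X) (s : R) :
  continuous Finv -> differentiable F (x0 + s *: v) ->
  {for s, continuous (fun s : R => Finv (F (x0 + s *: v)) - s *: v)}.
Proof.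
move=> Fic dF; apply: continuousB; last exact: scalel_continuous.
apply: (continuous_comp (f := fun s : R => F (x0 + s *: v))); last exact: Fic.
apply: (continuous_comp (f := fun s : R => x0 + s *: v)); last exact: differentiable_continuous.
apply: continuousD; first exact: cvg_cst.
exact: scalel_continuous.
Qed.

Unset Implicit Arguments.

Theorem corollary3p5 (R : realType) (X Y : completeNormedModType R)
  (Rad : R) (C : set X) (F : X -> Y) (x0 : X) (Finv : Y -> X)
  (f df : R -> R) :
  {within C, continuous F} ->
  cont_diff_on F (interior C) ->
  interior C x0 ->
  (* F'(x0) is non-singular, with bounded inverse Finv *)
  continuous Finv ->
  (forall v : X, Finv ('d F x0 v) = v) ->
  (forall w : Y, 'd F x0 (Finv w) = w) ->
  (* f : [0,R) -> R continuously differentiable with derivative df *)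
  (forall t, 0 < t < Rad -> is_derive t 1 f (df t)) ->
  (fun h => h^-1 * (f h - f 0)) @ 0^'+ --> df 0 ->
  {within `[0, Rad[, continuous df} ->
  ball x0 Rad `<=` C ->
  (forall x y : X, `|x - x0| < Rad -> `|y - x0| < Rad ->
     `|x - x0| + `|y - x| < Rad ->
     opnorm (fun v => Finv ('d F y v - 'd F x v))
       <= df (`|y - x| + `|x - x0|) - df `|x - x0|) ->
  `|Finv (F x0)| <= f 0 ->
  (* (h1) *) 0 < f 0 -> df 0 = -1 ->
  (* (h2) f' strictly increasing and convex on [0,R) *)
  (forall s t, 0 <= s -> s < t -> t < Rad -> df s < df t) ->
  (forall s t l, 0 <= s < Rad -> 0 <= t < Rad -> 0 <= l <= 1 ->
     df (l * s + (1 - l) * t) <= l * df s + (1 - l) * df t) ->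
  (* (h3) *) (exists t, 0 < t < Rad /\ f t < 0) ->
  forall y : X, ball x0 Rad y ->
    - f `|y - x0| <= `|Finv (F y)| <= f `|y - x0| + 2 * `|y - x0|.
Proof.
move=> Fc Fcd x0int Finvc FinvK FK hder hlim dfc ballC hyp fx0 f0 df0 hmono hconv [t3 [t3r _]] y hy.
have Rad0 : 0 < Rad by case/andP: t3r => ? ?; lra.
have FinvD : forall a b, Finv (a + b) = Finv a + Finv b.
  by move=> a b; rewrite -{1}(FK a) -{1}(FK b) -linearD FinvK.
have FinvZ : forall (k : R) a, Finv (k *: a) = k *: Finv a.
  by move=> k a; rewrite -{1}(FK a) -linearZ FinvK.
have FinvN : forall a, Finv (- a) = - Finv a.
  by move=> a; rewrite -scaleN1r FinvZ scaleN1r.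
have FinvB : forall a b, Finv (a - b) = Finv a - Finv b.
  by move=> a b; rewrite FinvD FinvN.
have [M M0 HM] := hom_bounded FinvZ (Finvc 0).
have yr : `|y - x0| < Rad by move: hy; rewrite -ball_normE /= distrC.
pose v := y - x0; pose t := `|v|.
have [t0|tn0] := eqVneq t 0.
  have yx : y = x0 by apply/eqP; rewrite -subr_eq0 -normr_eq0 -/v -/t t0.
  rewrite yx subrr normr0 mulr0 addr0.
  by apply/andP; split; [have := normr_ge0 (Finv (F x0)); lra | lra].
have tp : 0 < t by rewrite lt_def tn0 normr_ge0.
have tr : t < Rad by [].
have dfge : forall s, 0 <= s < Rad -> -1 <= df s.
  move=> s /andP[s0 sr]; have [->|sn0] := eqVneq s 0; first by rewrite df0.
  by rewrite -df0; apply/ltW/hmono => //; rewrite lt_def sn0 s0.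
have pts : forall s, 0 <= s <= 1 -> `|(x0 + s *: v) - x0| = s * t.
  by move=> s /andP[s0 s1]; rewrite addrC addKr normrZ ger0_norm.
have ptr : forall s, 0 <= s <= 1 -> s * t < Rad.
  move=> s /andP[s0 s1]; have : s * t <= t by rewrite ler_piMl // ltW.
  lra.
have dF : forall s, 0 <= s <= 1 -> differentiable F (x0 + s *: v).
  move=> s s01; apply: (Fcd _ (int_ball ballC _)).1.
  by rewrite pts //; exact: ptr.
have dF0 : differentiable F x0 by apply: (Fcd _ x0int).1.
pose psi := fun s : R => f (s * t) + s * t.
pose phi := fun s : R => Finv (F (x0 + s *: v)) - s *: v.
have K : `|phi 1 - phi 0| <= psi 1 - psi 0.
  apply: mvi.
  - move=> a b a0 ab b1; rewrite /psi.
    have [<-|anb] := eqVneq a b; first exact: lexx.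
    have ablt : a < b by rewrite lt_def eq_sym anb ab.
    have atbt : a * t < b * t by rewrite ltr_pM2r.
    have at0 : 0 <= a * t by rewrite mulr_ge0 // ltW.
    have bt : b * t < Rad by apply: ptr; rewrite b1 andbT; lra.
    have H := finc hder hlim hmono (andI2 at0 atbt) bt.
    have H2 := dfge (a * t) (andI2 at0 (lt_trans atbt bt)).
    move: H H2 atbt; set p := a * t; set q := b * t; set d := df p => H H2 pq.
    nra.
  - move=> s /andP[s0 s1] e e0.
    have s01 : 0 <= s <= 1 by rewrite s1 andbT ltW.
    have := phi_cont Finvc (dF s s01).
    move/cvgrPdist_le => /(_ e e0) /near_pt [d d0 Hd].
    exists d => // u /andP[su us]; apply: Hd.
    by rewrite distrC gtr0_norm ?subr_gt0 //; lra.
  - move=> s /andP[s0 s1] e e0.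
    have s01 : 0 <= s <= 1 by rewrite s0 ltW.
    pose xs := x0 + s *: v.
    have dFs : differentiable F xs := dF s s01.
    have eM : 0 < e / M by rewrite divr_gt0.
    have := @dcvg _ _ _ F xs v dFs; move/cvgrPdist_le => /(_ _ eM) /near_dpt [d1 d10 Hd1].
    pose L := fun w => Finv ('d F xs w - 'd F x0 w).
    have LZ : forall (k : R) w, L (k *: w) = k *: L w.
      move=> k w; have h1 : forall z, 'd F z (k *: w) = k *: 'd F z w.
        by move=> z; exact: linearZ.
      by rewrite /L !h1 -scalerBr FinvZ.
    have Lc : {for 0, continuous L}.
      apply: (continuous_comp (f := fun w => 'd F xs w - 'd F x0 w)); last exact: Finvc.
      by apply: continuousB; apply: diff_continuous.
    have Lb : `|L v| <= (df (s * t) - df 0) * t.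
      have H1 := opnorm_le LZ (hom_bounded LZ Lc) v.
      have H2 := hyp x0 xs.
      rewrite subrr normr0 add0r addr0 /xs (pts s s01) in H2.
      have := H2 Rad0 (ptr s s01) (ptr s s01); rewrite -/xs => H3.
      apply: (le_trans H1); rewrite -/t ler_wpM2r ?normr_ge0 //; exact: H3.
    have d0 : 0 < Num.min d1 (1 - s) by rewrite lt_min d10 subr_gt0.
    exists (Num.min d1 (1 - s)) => // u /andP[su usd].
    have m1 : Num.min d1 (1 - s) <= d1 by rewrite ge_min lexx.
    have m2 : Num.min d1 (1 - s) <= 1 - s by rewrite ge_min lexx orbT.
    have hd1 : u - s < d1 by lra.
    have hu1 : u < 1 by lra.
    have hp : 0 < u - s by rewrite subr_gt0.
    have hn : `|u - s - 0| < d1 by rewrite subr0 gtr0_norm.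
    have Hh := Hd1 (u - s) hn (lt0r_neq0 hp).
    have xu : x0 + u *: v = (u - s) *: v + xs by rewrite /xs scalerBl addrCA subrK.
    pose D := 'd F xs v.
    pose G := F ((u - s) *: v + xs) - F xs.
    have EW : G - (u - s) *: D = - ((u - s) *: (D - (u - s)^-1 *: G)).
      by rewrite scalerBr scalerA mulfV ?gt_eqF // scale1r opprB.
    have dec : phi u - phi s = Finv (G - (u - s) *: D) + (u - s) *: L v.
      rewrite /phi xu /L /G !FinvB FinvZ FinvK -/xs -/D.
      rewrite (id1 _ _ ((u - s) *: Finv D)) [(u - s) *: (Finv D - v)]scalerBr.
      by congr (_ + (_ - _)); rewrite scalerBl.
    have N1 : `|Finv (G - (u - s) *: D)| <= e * (u - s).
      apply: (le_trans (HM _)); rewrite EW normrN normrZ gtr0_norm //.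
      have : `|D - (u - s)^-1 *: G| <= e / M by exact: Hh.
      move=> H.
      have E : M * (e / M) = e by rewrite mulrCA mulfV ?gt_eqF // mulr1.
      by rewrite mulrCA [e * _]mulrC ler_pM2l // -{1}E ler_pM2l.
    have N2 : `|(u - s) *: L v| <= (u - s) * ((df (s * t) - df 0) * t).
      by rewrite normrZ gtr0_norm // ler_pM2l.
    have st0 : 0 <= s * t by rewrite mulr_ge0 // ltW.
    have stut : s * t < u * t by rewrite ltr_pM2r.
    have ut : u * t < Rad by apply: ptr; rewrite (ltW hu1) andbT; lra.
    have P := finc hder hlim hmono (andI2 st0 stut) ut.
    rewrite dec /psi; apply: (le_trans (ler_normD _ _)).
    have E1 : (u - s) * ((df (s * t) - df 0) * t) = (u * t - s * t) * df (s * t) + (u * t - s * t).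
      by rewrite df0; ring.
    move: N1 N2 P; rewrite E1; lra.
have xy : x0 + v = y by rewrite /v addrC subrK.
move: K; rewrite /phi /psi !mul1r !mul0r scale1r scale0r !addr0 subr0 xy.
rewrite [Finv (F y) - v - _]addrAC => K.
have [I1 I2] := fin_ineq (Finv (F y)) (Finv (F x0)) v.
rewrite -/v -/t.
rewrite -/t in I1 I2; apply/andP; split; lra.
Qed.
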